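(* Let $L>0$, $\delta_t>0$, integer $n\ge1$, and $p=\frac1n$. The cubic equation in $\alpha$ $$\Big(1-\frac{p(\alpha+\delta_t)}{\alpha+L+\delta_t}\Big)\Big(1+\frac{\delta_t}{\alpha}\Big)^2=1$$ has a unique positive root $\alpha$. With this $\alpha$, set $\tau_x=\frac{\alpha+\delta_t}{\alpha+L+\delta_t}$, $\tau_z=\frac{\tau_x}{\delta_t}-\frac{\alpha(1-\tau_x)}{\delta_tL}$, $C_{\rm IDC}=L^2+\frac{L\alpha^2p}{L+(1-p)(\alpha+\delta_t)}$ and $C_{\rm IFC}=2L+\frac{2L\alpha^2p}{(L+(1-p)(\alpha+\delta_t))\delta_t}$. Then $\frac{\alpha}{\delta_t}=O\big(n+\sqrt{n(L/\delta_t+1)}\big)$, $C_{\rm IDC}=O((L+\delta_t)^2)$ and $C_{\rm IFC}=O(L)$.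
   Context: These are the parameters used in the inner loop of the adaptively regularized accelerated SVRG method (R-Acc-SVRG-G) for regularization parameter $\delta_t$. The $O(\cdot)$ hides absolute constants. *)

(* Defs.v *)
From Stdlib Require Import Reals.
Open Scope R_scope.

Definition pn (n : nat) : R := / INR n.

Definition alpha_eq (L delta : R) (n : nat) (alpha : R) : Prop :=
  (1 - pn n * (alpha + delta) / (alpha + L + delta)) * (1 + delta / alpha) ^ 2 = 1.

Definition tau_x (L delta alpha : R) : R := (alpha + delta) / (alpha + L + delta).

Definition tau_z (L delta alpha : R) : R :=
  tau_x L delta alpha / delta - alpha * (1 - tau_x L delta alpha) / (delta * L).

Definition C_IDC (L delta : R) (n : nat) (alpha : R) : R :=
  L ^ 2 + L * alpha ^ 2 * pn n / (L + (1 - pn n) * (alpha + delta)).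

Definition C_IFC (L delta : R) (n : nat) (alpha : R) : R :=
  2 * L + 2 * L * alpha ^ 2 * pn n / ((L + (1 - pn n) * (alpha + delta)) * delta).

(* Main.v *)
Require Import Defs.
From Stdlib Require Import Reals Lra Psatz.
Open Scope R_scope.

Definition G (L d N a : R) : R := (a+d)*a^2 - ((N-1)*(a+d)+N*L)*d*(2*a+d).

Lemma eq_iff L d n a : 0 < L -> 0 < d -> (1 <= n)%nat -> 0 < a ->
  (alpha_eq L d n a <-> G L d (INR n) a = 0).
Proof.
  intros HL Hd Hn Ha.
  assert (HN : 1 <= INR n) by (replace 1 with (INR 1) by reflexivity; apply le_INR; exact Hn).
  unfold alpha_eq, pn.
  assert (E : (1 - / INR n * (a + d) / (a + L + d)) * (1 + d / a) ^ 2
     = 1 - G L d (INR n) a / (INR n * (a+L+d) * a^2)).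
  { unfold G. field. repeat split; lra. }
  rewrite E.
  assert (0 < INR n * (a+L+d) * a^2).
  { apply Rmult_lt_0_compat; [apply Rmult_lt_0_compat; lra| nra]. }
  split; intro H1.
  - assert (H2 : G L d (INR n) a / (INR n * (a+L+d) * a^2) = 0) by lra.
    unfold Rdiv in H2. apply Rmult_integral in H2. destruct H2 as [H2|H2]; auto.
    exfalso. apply (Rinv_neq_0_compat _ (Rgt_not_eq _ _ H)). exact H2.
  - rewrite H1. unfold Rdiv. ring.
Qed.

Lemma G_cont L d N : continuity (fun a => G L d N a).
Proof.
  unfold G.
  repeat first [ apply continuity_minus | apply continuity_plus | apply continuity_mult
               | apply continuity_const; intros ?? ; reflexivity | apply derivable_continuous; apply derivable_id
               | apply continuity_pow ].
Qed.

Lemma G_root L d N : 0 < L -> 0 < d -> 1 <= N ->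
  exists a, 0 < a /\ G L d N a = 0.
Proof.
  intros HL Hd HN.
  set (M := 6*N*d + 3*N*L).
  assert (HM : d <= M) by (unfold M; nra).
  assert (G0 : G L d N 0 < 0).
  { unfold G. assert (0 <= (N-1)*d) by (apply Rmult_le_pos; lra).
    assert (0 < N*L) by (apply Rmult_lt_0_compat; lra).
    assert (0 < ((N-1)*d + N*L)) by lra.
    replace ((0 + d) * 0 ^ 2 - ((N - 1) * (0 + d) + N * L) * d * (2 * 0 + d)) with (- (((N-1)*d + N*L)*(d*d))) by ring.
    assert (0 < d*d) by nra. nra. }
  assert (GM : 0 < G L d N M).
  { unfold G.
    assert (h1 : M^2 > 6*(N-1)*d*M + 3*N*L*d).
    { assert (M*M >= M*(6*N*d)) by (apply Rmult_ge_compat_l; unfold M; nra).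
      assert (6*d*M >= 6*d*(3*N*L)) by (apply Rmult_ge_compat_l; unfold M; nra).
      nra. }
    assert (h2 : ((N-1)*(M+d)+N*L)*d*(2*M+d) <= (6*(N-1)*d*M + 3*N*L*d)*M).
    { assert (0 <= (N-1)*(M+d)+N*L) by nra.
      assert (((N-1)*(M+d)+N*L) <= (N-1)*(2*M) + N*L) by nra.
      assert (d*(2*M+d) <= 3*M*d) by nra.
      assert (((N-1)*(M+d)+N*L)*(d*(2*M+d)) <= ((N-1)*(2*M)+N*L)*(3*M*d)).
      { apply Rmult_le_compat; nra. }
      nra. }
    assert ((M+d)*M^2 >= M*M^2) by nra.
    assert (M*M^2 > M*(6*(N-1)*d*M + 3*N*L*d)) by (apply Rmult_gt_compat_l; lra).
    nra. }
  destruct (IVT (fun a => G L d N a) 0 M (G_cont L d N) ltac:(lra) G0 GM) as [z [Hz Gz]].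
  exists z. split; auto.
  destruct (Rle_lt_or_eq_dec 0 z (proj1 Hz)) as [H|H]; auto.
  subst z. simpl in Gz. lra.
Qed.

Lemma G_k L d N a : 0 < L -> 0 < d -> 1 <= N -> 0 < a -> G L d N a = 0 ->
  (N-1)*d*(2*/a + d*(/a*/a)) + N*L*d*(/a*/a + /a * /(a+d)) = 1.
Proof.
  intros HL Hd HN Ha HG. unfold G in HG.
  assert (E : (N-1)*d*(2*/a + d*(/a*/a)) + N*L*d*(/a*/a + /a * /(a+d))
     = 1 - G L d N a / ((a+d)*a^2)).
  { unfold G. field. lra. }
  rewrite E. unfold G. rewrite HG. unfold Rdiv. ring.
Qed.

Lemma G_uniq L d N a b : 0 < L -> 0 < d -> 1 <= N -> 0 < a -> a < b ->
  G L d N a = 0 -> G L d N b = 0 -> False.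
Proof.
  intros HL Hd HN Ha Hab Ga Gb.
  pose proof (G_k L d N a HL Hd HN Ha Ga) as Ka.
  pose proof (G_k L d N b HL Hd HN ltac:(lra) Gb) as Kb.
  assert (i1 : /b < /a) by (apply Rinv_lt_contravar; nra).
  assert (i2 : /(b+d) < /(a+d)) by (apply Rinv_lt_contravar; nra).
  assert (p1 : 0 < /b) by (apply Rinv_0_lt_compat; lra).
  assert (p2 : 0 < /(b+d)) by (apply Rinv_0_lt_compat; lra).
  assert (i3 : /b*/b < /a*/a) by nra.
  assert (i4 : /b*/(b+d) < /a*/(a+d)) by nra.
  assert (0 < N*L*d) by (apply Rmult_lt_0_compat; [nra|lra]).
  assert ((N-1)*d*(2*/b + d*(/b*/b)) <= (N-1)*d*(2*/a + d*(/a*/a))).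
  { apply Rmult_le_compat_l; nra. }
  assert (N*L*d*(/b*/b + /b * /(b+d)) < N*L*d*(/a*/a + /a * /(a+d))).
  { apply Rmult_lt_compat_l; lra. }
  lra.
Qed.

Lemma div_le (u X b : R) : 0 < X -> u <= b * X -> u / X <= b.
Proof.
  intros HX H. replace b with (b*X*/X) by (field; lra).
  unfold Rdiv. apply Rmult_le_compat_r; [left; apply Rinv_0_lt_compat; lra| lra].
Qed.

Lemma key1 L d N a : 0 < L -> 0 < d -> 1 <= N -> 0 < a -> G L d N a = 0 ->
  a^2 <= 2*d*((N-1)*(a+d)+N*L).
Proof.
  intros HL Hd HN Ha HG. unfold G in HG.
  assert (0 <= (N-1)*(a+d)+N*L) by (assert (0 <= (N-1)*(a+d)) by (apply Rmult_le_pos; lra);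
     assert (0 < N*L) by (apply Rmult_lt_0_compat; lra); lra).
  assert (h : a^2*(a+d) <= (2*d*((N-1)*(a+d)+N*L))*(a+d)).
  { replace (a^2*(a+d)) with ((a+d)*a^2) by ring. rewrite Rminus_diag_uniq_sym with (r1 := (a+d)*a^2) (r2 := ((N-1)*(a+d)+N*L)*d*(2*a+d)) by lra.
    assert (0 <= ((N-1)*(a+d)+N*L)*d) by (apply Rmult_le_pos; lra).
    nra. }
  apply Rmult_le_reg_r with (a+d); lra.
Qed.

Lemma key2 L d N a : 0 < L -> 0 < d -> 1 <= N -> 0 < a -> G L d N a = 0 ->
  a <= d * (2*N + 2*sqrt (N*(L/d+1))).
Proof.
  intros HL Hd HN Ha HG.
  set (s := sqrt (N*(L/d+1))).
  assert (Hs2 : s*s = N*(L/d+1)) by (apply sqrt_sqrt; assert (0 < L/d) by (apply Rdiv_lt_0_compat; lra); nra).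
  assert (Hs0 : 0 <= s) by apply sqrt_pos.
  assert (Hds : (d*s)*(d*s) = N*L*d + N*d*d) by (replace ((d*s)*(d*s)) with (d*d*(s*s)) by ring; rewrite Hs2; field; lra).
  pose proof (key1 L d N a HL Hd HN Ha HG) as K.
  assert (K2 : a*a <= 2*N*d*a + 2*((d*s)*(d*s))).
  { rewrite Hds. assert (0 <= N*d*d) by (apply Rmult_le_pos; [nra|lra]). nra. }
  destruct (Rle_or_lt a (d * (2*N + 2*s))) as [H|H]; auto.
  exfalso.
  assert (0 <= d*s) by (apply Rmult_le_pos; lra).
  assert (a*a > a*(2*N*d + 2*(d*s))) by (apply Rmult_gt_compat_l; nra).
  assert (0 <= d*N) by (apply Rmult_le_pos; lra).
  assert (a >= d*s) by nra.
  assert (a*(2*(d*s)) >= (d*s)*(2*(d*s))) by (apply Rmult_ge_compat_r; lra).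
  nra.
Qed.

Theorem proposition3 :
  (forall (L delta : R) (n : nat), 0 < L -> 0 < delta -> (1 <= n)%nat ->
     exists! alpha : R, 0 < alpha /\ alpha_eq L delta n alpha)
  /\
  (exists C : R, 0 < C /\
     forall (L delta : R) (n : nat) (alpha : R),
       0 < L -> 0 < delta -> (1 <= n)%nat ->
       0 < alpha -> alpha_eq L delta n alpha ->
       alpha / delta <= C * (INR n + sqrt (INR n * (L / delta + 1))) /\
       C_IDC L delta n alpha <= C * (L + delta) ^ 2 /\
       C_IFC L delta n alpha <= C * L).
Proof.
  split.
  - intros L d n HL Hd Hn.
    assert (HN : 1 <= INR n) by (replace 1 with (INR 1) by reflexivity; apply le_INR; exact Hn).
    destruct (G_root L d (INR n) HL Hd HN) as [a [Ha Ga]].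
    exists a. split.
    + split; auto. apply (eq_iff L d n a HL Hd Hn Ha). exact Ga.
    + intros b [Hb Eb]. apply (eq_iff L d n b HL Hd Hn Hb) in Eb.
      destruct (Rtotal_order a b) as [H|[H|H]]; auto.
      * exfalso. exact (G_uniq L d (INR n) a b HL Hd HN Ha H Ga Eb).
      * exfalso. exact (G_uniq L d (INR n) b a HL Hd HN Hb H Eb Ga).
  - exists 6. split; [lra|].
    intros L d n a HL Hd Hn Ha E.
    assert (HN : 1 <= INR n) by (replace 1 with (INR 1) by reflexivity; apply le_INR; exact Hn).
    apply (eq_iff L d n a HL Hd Hn Ha) in E.
    set (N := INR n) in *.
    assert (Hs0 : 0 <= sqrt (N*(L/d+1))) by apply sqrt_pos.
    pose proof (key1 L d N a HL Hd HN Ha E) as K1.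
    pose proof (key2 L d N a HL Hd HN Ha E) as K2.
    assert (HX : 0 < (N-1)*(a+d)+N*L) by (assert (0 <= (N-1)*(a+d)) by (apply Rmult_le_pos; lra);
       assert (0 < N*L) by (apply Rmult_lt_0_compat; lra); lra).
    assert (HQ : a^2 * pn n / (L + (1 - pn n)*(a+d)) <= 2*d).
    { unfold pn; fold N.
      assert (ED : L + (1 - /N)*(a+d) = ((N-1)*(a+d)+N*L)/N) by (field; lra).
      rewrite ED.
      replace (a^2 * /N / (((N-1)*(a+d)+N*L)/N)) with (a^2 / ((N-1)*(a+d)+N*L)) by (field; lra).
      apply div_le; lra. }
    assert (HD : 0 < L + (1 - pn n)*(a+d)).
    { unfold pn; fold N. assert (/N <= 1) by (rewrite <- Rinv_1; apply Rinv_le_contravar; lra). nra. }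
    split; [|split].
    + apply div_le; [lra|]. nra.
    + unfold C_IDC.
      replace (L * a ^ 2 * pn n / (L + (1 - pn n) * (a + d))) with (L * (a^2 * pn n / (L + (1 - pn n)*(a+d)))) by (unfold Rdiv; ring).
      assert (L * (a^2 * pn n / (L + (1 - pn n)*(a+d))) <= L*(2*d)) by (apply Rmult_le_compat_l; lra).
      nra.
    + unfold C_IFC.
      replace (2 * L * a ^ 2 * pn n / ((L + (1 - pn n) * (a + d)) * d)) with (2 * L * (a^2 * pn n / (L + (1 - pn n)*(a+d))) / d) by (field; split; lra).
      assert (2 * L * (a^2 * pn n / (L + (1 - pn n)*(a+d))) / d <= 2*L*(2*d)/d).
      { unfold Rdiv. apply Rmult_le_compat_r; [left; apply Rinv_0_lt_compat; lra|].
        apply Rmult_le_compat_l; lra. }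
      replace (2*L*(2*d)/d) with (4*L) in H by (field; lra).
      lra.
Qed.
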